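(* Let $n$ be a positive integer, let $\mathbf{A}$ be an infinite $n$-generated subdirectly irreducible bi-Heyting algebra validating $LFC$, and let $\mathfrak{X}=\mathbf{A}_*$. Then every $x\in X$ has at most $2^n$ immediate predecessors that are minimal points of $\mathfrak{X}$.
   Context: Bi-Heyting algebras are bounded distributive lattices with residuated $\to$ and $\leftarrow$ ($c\le a\to b$ iff $a\wedge c\le b$; $a\leftarrow b\le c$ iff $a\le b\vee c$). $\mathbf{A}_*$ is the bi-Esakia dual: prime filters ordered by inclusion, with the Priestley topology generated by $\{F: a\in F\}$ and their complements. $LFC=\mathsf{bi\text{-}LC}+\beta(\mathfrak{F}_0)+\mathcal{J}(\mathfrak{F}_1)+\mathcal{J}(\mathfrak{F}_2)+\mathcal{J}(\mathfrak{F}_3)$, with $\mathsf{bi\text{-}LC}$ being bi-intuitionistic logic plus $(p\to q)\vee(q\to p)$. For SI $\mathbf{A}$ validating $\mathsf{bi\text{-}LC}$, $\mathbf{A}_*$ is a bi-Esakia co-tree: it has a greatest element and principal upsets are chains. For such $\mathfrak{X}$ and a finite co-tree $\mathfrak{Y}$: - $\mathfrak{X}$ refutes $\beta(\mathfrak{Y})$ iff $\mathfrak{Y}$ order-embeds into $\mathfrak{X}$; - $\mathfrak{X}$ refutes $\mathcal{J}(\mathfrak{Y})$ iff there is a continuous surjective bi-p-morphism $\mathfrak{X}\to\mathfrak{Y}$. The co-trees are: - $\mathfrak{F}_0$: $d<b<a$, $e<c<a$; - $\mathfrak{F}_1$: the chain $c<b<a$; - $\mathfrak{F}_2$: the chain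 $d<c<b<a$ plus $a'<a$, with $a'$ incomparable to $b,c,d$; - $\mathfrak{F}_3$: a top over three incomparable minimal points. $y$ is an immediate predecessor of $x$ if $y<x$ and nothing lies strictly between them. *)

(* Defs.v *)
From HB Require Import structures.
From mathcomp Require Import all_boot all_order.
Set Implicit Arguments. Unset Strict Implicit. Unset Printing Implicit Defensive.
Import Order.LTheory.

Record finPoset := FinPoset { fp_T : finType; fp_le : rel fp_T }.

(* F0 : a=0, b=1, c=2, d=3, e=4 ;  d<b<a, e<c<a *)
Definition F0 : finPoset := @FinPoset 'I_5 (fun x y : 'I_5 =>
  [|| nat_of_ord x == nat_of_ord y, nat_of_ord y == 0,
      (nat_of_ord x == 3) && (nat_of_ord y == 1) |
      (nat_of_ord x == 4) && (nat_of_ord y == 2)]).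
(* F1 : chain c<b<a with a=0, b=1, c=2 *)
Definition F1 : finPoset := @FinPoset 'I_3 (fun x y : 'I_3 => leq y x).
(* F2 : a=0, b=1, c=2, d=3, a'=4 ; chain d<c<b<a and a'<a *)
Definition F2 : finPoset := @FinPoset 'I_5 (fun x y : 'I_5 =>
  [|| nat_of_ord x == nat_of_ord y, nat_of_ord y == 0 |
      [&& leq x 3, leq y 3 & leq y x]]).
Definition F3 : finPoset := @FinPoset 'I_4 (fun x y : 'I_4 =>
  (nat_of_ord x == nat_of_ord y) || (nat_of_ord y == 0)).

Local Open Scope order_scope.

Definition is_biHeyting {d : Order.disp_t} {L : tbDistrLatticeType d}
  (imp coimp : L -> L -> L) : Prop :=
  (forall a b c : L, (c <= imp a b) = (a `&` c <= b)) /\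
  (forall a b c : L, (coimp a b <= c) = (a <= b `|` c)).

Inductive generated {d : Order.disp_t} {L : tbDistrLatticeType d}
  (imp coimp : L -> L -> L) (G : L -> Prop) : L -> Prop :=
| gen_base x : G x -> generated imp coimp G x
| gen_bot : generated imp coimp G \bot
| gen_top : generated imp coimp G \top
| gen_meet x y : generated imp coimp G x -> generated imp coimp G y ->
    generated imp coimp G (x `&` y)
| gen_join x y : generated imp coimp G x -> generated imp coimp G y ->
    generated imp coimp G (x `|` y)
| gen_imp x y : generated imp coimp G x -> generated imp coimp G y ->
    generated imp coimp G (imp x y)
| gen_coimp x y : generated imp coimp G x -> generated imp coimp G y ->
    generated imp coimp G (coimp x y).

Definition n_generated {d : Order.disp_t} {L : tbDistrLatticeType d}
  (imp coimp : L -> L -> L) (n : nat) : Prop :=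
  exists g : 'I_n -> L,
    forall x : L, generated imp coimp (fun y => exists i, y = g i) x.

Definition infinite_alg {d : Order.disp_t} (L : tbDistrLatticeType d) : Prop :=
  ~ exists s : seq L, forall x : L, x \in s.

Definition bh_congruence {d : Order.disp_t} {L : tbDistrLatticeType d}
  (imp coimp : L -> L -> L) (th : L -> L -> Prop) : Prop :=
  [/\ (forall x, th x x), (forall x y, th x y -> th y x),
      (forall x y z, th x y -> th y z -> th x z) &
      (forall x x' y y', th x x' -> th y y' ->
        [/\ th (x `&` y) (x' `&` y'), th (x `|` y) (x' `|` y'),
            th (imp x y) (imp x' y') & th (coimp x y) (coimp x' y')])].

(* subdirectly irreducible: the non-identity congruences have a
   non-identity intersection (Birkhoff's formulation) *)
Definition subdirectly_irreducible {d : Order.disp_t} {L : tbDistrLatticeType d}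
  (imp coimp : L -> L -> L) : Prop :=
  exists a b : L, a <> b /\
    forall th, bh_congruence imp coimp th ->
      (exists x y, x <> y /\ th x y) -> th a b.

Record prime_filter {d : Order.disp_t} {L : tbDistrLatticeType d}
  (F : L -> Prop) : Prop := {
  pf_top : F \top;
  pf_bot : ~ F \bot;
  pf_up : forall a b, a <= b -> F a -> F b;
  pf_meet : forall a b, F a -> F b -> F (a `&` b);
  pf_prime : forall a b, F (a `|` b) -> F a \/ F b }.

Record point {d : Order.disp_t} (L : tbDistrLatticeType d) := Point {
  pset : L -> Prop; pprime : prime_filter pset }.

Section DualSpace.
Context {d : Order.disp_t} {L : tbDistrLatticeType d}.

Definition ple (x y : point L) : Prop := forall a, pset x a -> pset y a.
Definition plt (x y : point L) : Prop := ple x y /\ ~ ple y x.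
Definition same (x y : point L) : Prop := ple x y /\ ple y x.
Definition minimal (x : point L) : Prop := forall y, ~ plt y x.
Definition immediate_pred (y x : point L) : Prop :=
  plt y x /\ ~ exists z, plt y z /\ plt z x.

(* Priestley topology: subbasis {F | a in F} and their complements *)
Definition basic_nbhd (cs : seq (L * bool)) (x : point L) : Prop :=
  forall c, c \in cs -> if c.2 then pset x c.1 else ~ pset x c.1.
Definition popen (U : point L -> Prop) : Prop :=
  forall x, U x -> exists cs, basic_nbhd cs x /\ forall y, basic_nbhd cs y -> U y.

(* maps into a finite (discrete) poset *)
Definition continuous_to (Y : finPoset) (f : point L -> fp_T Y) : Prop :=
  forall y, popen (fun x => f x = y).
Definition bi_p_morphism (Y : finPoset) (f : point L -> fp_T Y) : Prop :=
  [/\ (forall x x', ple x x' -> fp_le (f x) (f x')),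
      (forall x y, fp_le (f x) y -> exists x', ple x x' /\ f x' = y) &
      (forall x y, fp_le y (f x) -> exists x', ple x' x /\ f x' = y)].

Definition refutes_J (Y : finPoset) : Prop :=
  exists f : point L -> fp_T Y,
    [/\ continuous_to f, (forall y, exists x, f x = y) & bi_p_morphism f].
Definition refutes_beta (Y : finPoset) : Prop :=
  exists e : fp_T Y -> point L, forall y y', fp_le y y' <-> ple (e y) (e y').
End DualSpace.

Definition validates_biLC {d : Order.disp_t} {L : tbDistrLatticeType d}
  (imp : L -> L -> L) : Prop :=
  forall p q : L, imp p q `|` imp q p = \top.

Definition validates_LFC {d : Order.disp_t} {L : tbDistrLatticeType d}
  (imp coimp : L -> L -> L) : Prop :=
  [/\ validates_biLC imp, ~ @refutes_beta d L F0, ~ @refutes_J d L F1,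
      ~ @refutes_J d L F2 & ~ @refutes_J d L F3].

(* Main.v *)
Require Import Defs.
From HB Require Import structures.
From mathcomp Require Import all_boot all_order.
From mathcomp Require classical_sets.
From Stdlib Require Import Classical ClassicalEpsilon.
Set Implicit Arguments. Unset Strict Implicit. Unset Printing Implicit Defensive.
Import Order.LTheory.
Local Open Scope order_scope.

Definition isfilt {d} {L : tbDistrLatticeType d} (F : L -> Prop) :=
  [/\ F \top, (forall a b, a <= b -> F a -> F b) & (forall a b, F a -> F b -> F (a `&` b))].
Definition isideal {d} {L : tbDistrLatticeType d} (I : L -> Prop) :=
  [/\ I \bot, (forall a b, a <= b -> I b -> I a) & (forall a b, I a -> I b -> I (a `|` b))].

Lemma pft d (L : tbDistrLatticeType d) (F I : L -> Prop) :
  isfilt F -> isideal I -> (forall c, F c -> I c -> False) ->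
  exists G : point L, (forall c, F c -> pset G c) /\ (forall c, pset G c -> I c -> False).
Proof.
move=> [Ft Fup Fmeet] [Ib Idn Ijoin] FI.
pose P := fun A : (L -> Prop) => isfilt (fun c => A c \/ F c) /\ (forall c, (A c \/ F c) -> I c -> False).
have [A [PA Amax]] : exists A : (L -> Prop), P A /\ (forall B : (L -> Prop), classical_sets.proper A B -> ~ P B).
  apply: classical_sets.Zorn_bigcup => C CP tot.
  have lift : forall X c, C X -> (X c \/ F c) -> (classical_sets.bigcup C (fun X => X) c \/ F c).
    by move=> X c CX [Xc|Fc]; [left; exists X|right].
  split; first split.
  - by right.
  - move=> a b ab [[X CX Xa]|Fa]; last by right; apply: Fup Fa.
    have [[_ up _] _] := CP X CX.
    exact: (lift X _ CX (up a b ab (or_introl Xa))).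
  - move=> a b [[X CX Xa]|Fa] [[Y CY Yb]|Fb]; last by right; apply: Fmeet.
    + have [XY|YX] := tot X Y CX CY.
      * have [[_ _ me] _] := CP Y CY.
        exact: (lift Y _ CY (me a b (or_introl (XY _ Xa)) (or_introl Yb))).
      * have [[_ _ me] _] := CP X CX.
        exact: (lift X _ CX (me a b (or_introl Xa) (or_introl (YX _ Yb)))).
    + have [[_ _ me] _] := CP X CX.
      exact: (lift X _ CX (me a b (or_introl Xa) (or_intror Fb))).
    + have [[_ _ me] _] := CP Y CY.
      exact: (lift Y _ CY (me a b (or_intror Fa) (or_introl Yb))).
  - move=> c [[X CX Xc]|Fc] Ic; last exact: FI Fc Ic.
    have [_ dis] := CP X CX; exact: dis c (or_introl Xc) Ic.
have [[At Aup Ameet] Adis] := PA.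
pose G := fun c => A c \/ F c.
have claim : forall c, ~ G c -> exists g, G g /\ exists i, I i /\ g `&` c <= i.
  move=> c nGc; apply: NNPP => nex.
  pose B := fun t => exists g, G g /\ g `&` c <= t.
  have FB : forall t, F t -> B t by move=> t Ft'; exists t; split; [right|exact: leIl].
  have GB : forall t, G t -> B t by move=> t Gt; exists t; split; [|exact: leIl].
  apply: (Amax B).
    split; first by move=> t At'; apply: GB; left.
    move=> BA; apply: nGc; left; apply: BA; exists \top; split; first by right.
    by rewrite meetC leIl.
  split; first split.
  - by left; apply: FB.
  - move=> a b ab Ha; left; case: Ha => [[g [Gg ga]]|Fa]; last by apply: FB; apply: Fup Fa.
    by exists g; split => //; apply: le_trans ab.
  - move=> a b Ha Hb; left.
    have [g1 [Gg1 g1a]] : B a by case: Ha => // /FB.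
    have [g2 [Gg2 g2b]] : B b by case: Hb => // /FB.
    exists (g1 `&` g2); split; first exact: Ameet.
    rewrite lexI; apply/andP; split.
      by apply: le_trans g1a; apply: leI2 => //; apply: leIl.
    by apply: le_trans g2b; apply: leI2 => //; apply: leIr.
  - move=> t [[g [Gg gt]]|Ft'] It; last exact: FI Ft' It.
    by apply: nex; exists g; split => //; exists t.
have Gprime : prime_filter G.
  split.
  - by right.
  - by move=> Gb; apply: (Adis \bot Gb Ib).
  - exact: Aup.
  - exact: Ameet.
  - move=> a b Gab; apply: NNPP => nab.
    have nGa : ~ G a by move=> ?; apply: nab; left.
    have nGb : ~ G b by move=> ?; apply: nab; right.
    have [g1 [Gg1 [i1 [Ii1 h1]]]] := claim a nGa.
    have [g2 [Gg2 [i2 [Ii2 h2]]]] := claim b nGb.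
    have Gm : G ((g1 `&` g2) `&` (a `|` b)) by apply: (Ameet) => //; apply: (Ameet).
    apply: (Adis _ Gm); apply: (Idn _ (i1 `|` i2)); last exact: Ijoin.
    rewrite meetUr; apply: leU2.
      by apply: le_trans h1; apply: leI2 => //; apply: leIl.
    by apply: le_trans h2; apply: leI2 => //; apply: leIr.
exists (Point Gprime); split; first by move=> c Fc; right.
by move=> c Gc Ic; apply: (Adis c Gc Ic).
Qed.

Lemma meet_char d (L : tbDistrLatticeType d) (y : point L) a b :
  pset y (a `&` b) <-> pset y a /\ pset y b.
Proof.
split; last by move=> [ya yb]; exact: (pf_meet (pprime y) ya yb).
by move=> h; split; apply: (pf_up (pprime y) _ h); [exact: leIl|exact: leIr].
Qed.

Lemma join_char d (L : tbDistrLatticeType d) (y : point L) a b :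
  pset y (a `|` b) <-> pset y a \/ pset y b.
Proof.
split; first by move=> h; apply: (pf_prime (pprime y)); exact: h.
by case=> h; apply: (pf_up (pprime y) _ h); [exact: leUl|exact: leUr].
Qed.

Lemma mp_le d (L : tbDistrLatticeType d) (imp coimp : L -> L -> L) :
  is_biHeyting imp coimp -> forall a b : L, a `&` imp a b <= b.
Proof. by move=> [H1 _] a b; rewrite -H1 lexx. Qed.

Lemma lc_chain d (L : tbDistrLatticeType d) (imp coimp : L -> L -> L) :
  is_biHeyting imp coimp -> validates_biLC imp ->
  forall y z w : point L, ple y z -> ple y w -> ple z w \/ ple w z.
Proof.
move=> HB HLC y z w yz yw; apply: NNPP => H.
have nzw : ~ ple z w by move=> ?; apply: H; left.
have nwz : ~ ple w z by move=> ?; apply: H; right.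
have [p hp] := not_all_ex_not _ _ nzw; have [zp nwp] := imply_to_and _ _ hp.
have [q hq] := not_all_ex_not _ _ nwz; have [wq nzq] := imply_to_and _ _ hq.
have : pset y (imp p q `|` imp q p) by rewrite HLC; exact: pf_top (pprime y).
case/(pf_prime (pprime y)) => h.
- apply: nzq; apply: (pf_up (pprime z) (mp_le HB p q)).
  exact: (pf_meet (pprime z) zp (yz _ h)).
- apply: nwp; apply: (pf_up (pprime w) (mp_le HB q p)).
  exact: (pf_meet (pprime w) wq (yw _ h)).
Qed.

Lemma up_imm d (L : tbDistrLatticeType d) (imp coimp : L -> L -> L) :
  is_biHeyting imp coimp -> validates_biLC imp ->
  forall y x z : point L, immediate_pred y x -> ple y z -> ple z y \/ ple x z.
Proof.
move=> HB HLC y x z [[yx nxy] nex] yz.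
case: (classic (ple x z)) => xz; first by right.
have zx : ple z x by case: (lc_chain HB HLC yz yx).
case: (classic (ple z y)) => zy; first by left.
by exfalso; apply: nex; exists z.
Qed.

Lemma imp_char d (L : tbDistrLatticeType d) (imp coimp : L -> L -> L) :
  is_biHeyting imp coimp -> forall (y : point L) a b,
  pset y (imp a b) <-> (forall z : point L, ple y z -> pset z a -> pset z b).
Proof.
move=> HB y a b; split.
  move=> h z yz za; apply: (pf_up (pprime z) (mp_le HB a b)).
  exact: (pf_meet (pprime z) za (yz _ h)).
move=> H; apply: NNPP => nin.
pose F := (fun c => exists u, pset y u /\ u `&` a <= c).
pose I := (fun c : L => c <= b).
have hF : isfilt F.
  split.
  + by exists \top; split; [exact: pf_top (pprime y)|exact: lex1].
  + by move=> c e ce [u [yu uc]]; exists u; split => //; apply: le_trans ce.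
  + move=> c e [u [yu uc]] [v [yv ve]]; exists (u `&` v); split.
      exact: (meet_char y u v).2 (conj yu yv).
    rewrite lexI; apply/andP; split.
      by apply: le_trans uc; apply: leI2 => //; apply: leIl.
    by apply: le_trans ve; apply: leI2 => //; apply: leIr.
have hI : isideal I.
  split; first exact: le0x.
  + by move=> c e ce eb; apply: le_trans eb.
  + by move=> c e cb eb; rewrite /I /= leUx; apply/andP.
have hd : forall c, F c -> I c -> False.
  move=> c [u [yu uc]] cb; apply: nin.
  apply: (pf_up (pprime y) _ yu); case: HB => H1 _; rewrite H1 meetC.
  exact: le_trans cb.
have [G [FG GI]] := pft hF hI hd.
- have yG : ple y G by move=> u yu; apply: FG; exists u; split => //; exact: leIl.
  have Ga : pset G a by apply: FG; exists \top; split; [exact: pf_top (pprime y)|rewrite meetC leIl].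
  exact: GI (H G yG Ga) (lexx b).
Qed.

Lemma coimp_char d (L : tbDistrLatticeType d) (imp coimp : L -> L -> L) :
  is_biHeyting imp coimp -> forall (y : point L) a b, minimal y ->
  pset y (coimp a b) <-> (pset y a /\ ~ pset y b).
Proof.
move=> [_ H2] y a b ymin; split; last first.
  move=> [ya nyb].
  have : a <= b `|` coimp a b by rewrite -H2 lexx.
  move=> le; case: (pf_prime (pprime y) (pf_up (pprime y) le ya)) => [yb|//]; by exfalso; apply: nyb.
move=> yc; split.
  by apply: (pf_up (pprime y) _ yc); rewrite H2 leUr.
pose F := (fun c => a <= c).
pose I := (fun c => exists i, ~ pset y i /\ c <= i `|` b).
have hF : isfilt F.
  split; first exact: lex1.
  + by move=> c e ce ac; apply: le_trans ce.
  + by move=> c e ac ae; rewrite /F lexI; apply/andP.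
have hI : isideal I.
  split.
  + by exists \bot; split; [exact: (pf_bot (pprime y))|exact: le0x].
  + by move=> c e ce [i [ni ei]]; exists i; split => //; apply: le_trans ei.
  + move=> c e [i [ni ci]] [j [nj ej]]; exists (i `|` j); split.
      by case/(pf_prime (pprime y)).
    rewrite leUx; apply/andP; split.
      exact: (le_trans ci (leU2 (leUl i j) (lexx b))).
    exact: (le_trans ej (leU2 (leUr j i) (lexx b))).
have hd : forall c, F c -> I c -> False.
  move=> c ac [i [ni ci]]; apply: ni; apply: (pf_up (pprime y) _ yc).
  by rewrite H2 joinC; apply: le_trans ci.
have [G [FG GI]] := pft hF hI hd.
- have Gy : ple G y.
    move=> c Gc; apply: NNPP => nc; apply: (GI c Gc); exists c; split => //; exact: leUl.
  have yG : ple y G by apply: NNPP => nyG; apply: (ymin G); split.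
  move=> yb; apply: (GI b (yG _ yb)); exists \bot; split; first exact: (pf_bot (pprime y)).
  exact: leUr.
Qed.

Lemma imp_transfer d (L : tbDistrLatticeType d) (imp coimp : L -> L -> L) :
  is_biHeyting imp coimp -> validates_biLC imp ->
  forall (x y1 y2 : point L) a b,
  immediate_pred y1 x -> immediate_pred y2 x ->
  (pset y1 a <-> pset y2 a) -> (pset y1 b <-> pset y2 b) ->
  pset y1 (imp a b) -> pset y2 (imp a b).
Proof.
move=> HB HLC x y1 y2 a b i1 i2 Ea Eb.
rewrite !(imp_char HB) => H z y2z za.
case: (up_imm HB HLC i2 y2z) => [zy2|xz].
  apply: y2z; apply/Eb; apply: (H y1); first by move=> ?.
  by apply/Ea; apply: zy2.
apply: (H z) => // u y1u; apply: xz; exact: i1.1.1 _ y1u.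
Qed.

Lemma same_gen d (L : tbDistrLatticeType d) (imp coimp : L -> L -> L) (G : L -> Prop) :
  is_biHeyting imp coimp -> validates_biLC imp ->
  forall (x y1 y2 : point L),
  immediate_pred y1 x /\ minimal y1 -> immediate_pred y2 x /\ minimal y2 ->
  (forall c, G c -> (pset y1 c <-> pset y2 c)) ->
  forall a, generated imp coimp G a -> (pset y1 a <-> pset y2 a).
Proof.
move=> HB HLC x y1 y2 [i1 m1] [i2 m2] HG a ga.
elim: ga => {a}.
- exact: HG.
- by split => h; exfalso; [exact: (pf_bot (pprime y1) h)|exact: (pf_bot (pprime y2) h)].
- by split => _; [exact: (pf_top (pprime y2))|exact: (pf_top (pprime y1))].
- move=> a b _ Ea _ Eb; have M1 := @meet_char _ _ y1 a b; have M2 := @meet_char _ _ y2 a b; tauto.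
- move=> a b _ Ea _ Eb; have M1 := @join_char _ _ y1 a b; have M2 := @join_char _ _ y2 a b; tauto.
- move=> a b _ Ea _ Eb; split; first exact: (imp_transfer HB HLC i1 i2).
  apply: (imp_transfer HB HLC i2 i1); by apply: iff_sym.
- move=> a b _ Ea _ Eb; have M1 := @coimp_char _ _ _ _ HB y1 a b m1; have M2 := @coimp_char _ _ _ _ HB y2 a b m2; tauto.
Qed.

Definition pb (P : Prop) : bool := if excluded_middle_informative P then true else false.
Lemma pbP P : pb P = true <-> P.
Proof. by rewrite /pb; case: excluded_middle_informative. Qed.

Theorem lemma3p12 (n : nat) (disp : Order.disp_t) (L : tbDistrLatticeType disp)
  (imp coimp : L -> L -> L) :
  (0 < n)%N ->
  is_biHeyting imp coimp ->
  infinite_alg L ->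
  n_generated imp coimp n ->
  subdirectly_irreducible imp coimp ->
  validates_LFC imp coimp ->
  forall (x : point L) (m : nat) (ys : 'I_m -> point L),
    (forall i j, i <> j -> ~ same (ys i) (ys j)) ->
    (forall i, immediate_pred (ys i) x /\ minimal (ys i)) ->
    (m <= 2 ^ n)%N.
Proof.
move=> _ HB _ [g Hg] _ [HLC _ _ _ _] x m ys Hdist Himm.
pose col (i : 'I_m) : {ffun 'I_n -> bool} := [ffun k => pb (pset (ys i) (g k))].
have inj : injective col.
  move=> i j eq; apply: NNPP => nij; apply: (Hdist i j nij).
  have E : forall c, (exists k, c = g k) -> (pset (ys i) c <-> pset (ys j) c).
    move=> c [k ->]; have := congr1 (fun f : {ffun 'I_n -> bool} => f k) eq; rewrite /col !ffunE => e.
    by rewrite -(pbP (pset (ys i) (g k))) -(pbP (pset (ys j) (g k))) e.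
  have S := same_gen HB HLC (Himm i) (Himm j) E.
  by split => a h; [apply/(S a (Hg a))|apply/(S a (Hg a))].
have := leq_card col inj; rewrite card_ffun !card_ord card_bool.
done.
Qed.
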